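(* Let $l^1,\dots,l^T\in[0,1]^N$ be an arbitrary (adversarial) sequence of loss vectors, let $w^1\in\Delta^N$ have all entries positive, let $0<\eta<1$, and define $$w^{t+1}=w^t\odot\big(\mathbb{1}-\eta\,\Pi_{w^t} l^t\big),\qquad (\Pi_{w^t}l^t)_i=l^t_i-w^t\cdot l^t.$$ Then for every $u\in\Delta^N$, $$\sum_{t=1}^T w^t\cdot l^t-\sum_{t=1}^T u\cdot l^t\le \frac{D(u\,|\,w^1)}{\eta}+\frac{T\eta}{2(1-\eta)}.$$ In particular, taking $w^1=(1/N,\ldots,1/N)$ and $\eta=\frac{\sqrt{2\log N}}{\sqrt{2\log N}+\sqrt{T}}$ gives, for every $u\in\Delta^N$, $$\sum_{t=1}^T w^t\cdot l^t-\sum_{t=1}^T u\cdot l^t\le\sqrt{2T\log N}+\log N,$$ and this holds in particular for $u=e_j$, where $j$ is the best expert (minimizing $\sum_t l^t_j$) and $e_j$ is the standard basis vector.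
   Context: $\Delta^N=\{w\in\mathbb{R}^N : \sum_i w_i=1,\ w_i\ge 0\}$; $\odot$ is componentwise multiplication and $\mathbb{1}$ the all-ones vector. The relative entropy is $D(u\,|\,w)=\sum_{i:\,u_i\ne0}u_i\log(u_i/w_i)$. *)

(* Defs.v *)
From HB Require Import structures.
From mathcomp Require Import all_boot all_order all_algebra.
From mathcomp Require Import reals exp.
Set Implicit Arguments. Unset Strict Implicit. Unset Printing Implicit Defensive.
Import Order.TTheory GRing.Theory Num.Theory.
Local Open Scope ring_scope.

Definition in_simplex (R : realType) (N : nat) (w : 'I_N -> R) : Prop :=
  (forall i, 0 <= w i) /\ \sum_(i < N) w i = 1.

Definition dotv (R : realType) (N : nat) (u w : 'I_N -> R) : R :=
  \sum_(i < N) u i * w i.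

Definition relent (R : realType) (N : nat) (u w : 'I_N -> R) : R :=
  \sum_(i < N | u i != 0) u i * ln (u i / w i).

Definition mw_step (R : realType) (N : nat) (eta : R) (w l : 'I_N -> R)
  : 'I_N -> R :=
  fun i => w i * (1 - eta * (l i - dotv w l)).

(* weights L w1 eta t = w^{t+1}, i.e. 0-based: weights 0 = w^1, and the
   loss vector l^{t+1} is L t. *)
Fixpoint weights (R : realType) (N : nat) (eta : R) (w1 : 'I_N -> R)
  (L : nat -> 'I_N -> R) (t : nat) : 'I_N -> R :=
  match t with
  | 0 => w1
  | t'.+1 => mw_step eta (weights eta w1 L t') (L t')
  end.

Definition regret (R : realType) (N : nat) (eta : R) (w1 : 'I_N -> R)
  (L : nat -> 'I_N -> R) (T : nat) (u : 'I_N -> R) : R :=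
  \sum_(t < T) dotv (weights eta w1 L t) (L t) - \sum_(t < T) dotv u (L t).

Definition uniformw (R : realType) (N : nat) : 'I_N -> R := fun _ => N%:R^-1.

Definition basisv (R : realType) (N : nat) (j : 'I_N) : 'I_N -> R :=
  fun i => if i == j then 1 else 0.

(* Main.v *)
Require Import Defs.
From HB Require Import structures.
From mathcomp Require Import all_boot all_order all_algebra.
From mathcomp Require Import reals exp.
From mathcomp Require Import all_classical all_reals all_analysis.
From mathcomp Require Import ring lra.
Import Order.TTheory GRing.Theory Num.Theory.
Import numFieldNormedType.Exports.
Local Open Scope ring_scope.
Section S.
Variable R : realType.

Definition ommid : R -> R := cst 1 - id.
Definition gk (c : R) : R -> R := (@ln R + ommid) + (cst c * (ommid * ommid)).

Lemma gk_der (c x : R) : 0 < x -> is_derive x 1 (gk c) (x^-1 - 1 + 2 * c * (x - 1)).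
Proof.
move=> x0.
have h1 := (is_deriveB (is_derive_cst (1:R) x 1) (is_derive_id x 1)).
have hl := is_derive1_ln x0.
have hc := (is_derive_cst c x 1).
have := is_deriveD (is_deriveD hl h1) (is_deriveM hc (is_deriveM h1 h1)).
move=> H; apply: (is_derive_eq H).
rewrite /ommid /= /GRing.scale /=. have e : (cst 1 - id) x = 1 - x :> R by []. rewrite e mulr0. ring.
Qed.
End S.
Section T.
Variable R : realType.
Lemma gk_sign (c a y : R) : 0 < a <= y -> 1 <= 2 * c * a ->
  (y - 1) * (y^-1 - 1 + 2 * c * (y - 1)) >= 0.
Proof.
move=> /andP[a0 ay] ca.
have y0 : 0 < y by exact: lt_le_trans a0 ay.
have -> : y^-1 - 1 + 2 * c * (y - 1) = y^-1 * ((y - 1) * (2 * c * y - 1)).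
  by field; rewrite gt_eqF.
rewrite mulrCA mulr_ge0 //; first by rewrite invr_ge0 ltW.
rewrite mulrA.
have c0 : 0 <= 2 * c.
  rewrite -(pmulr_rge0 _ a0) mulrC; apply: le_trans ca; exact: ler01.
have : 1 <= 2 * c * y by apply: le_trans ca _; rewrite ler_wpM2l.
move=> h; rewrite mulr_ge0 // ?subr_ge0 // -expr2 sqr_ge0 //.
Qed.

Lemma gk_ge0 (c a x : R) : 0 < a <= x -> a <= 1 -> 1 <= 2 * c * a -> 0 <= gk R c x.
Proof.
move=> /andP[a0 ax] a1 ca.
have g1 : gk R c 1 = 0.
  by have -> : gk R c 1 = ln 1 + (1-1) + c*((1-1)*(1-1)) by []; rewrite ln1 subrr mul0r mulr0 !addr0.
have der (y : R) : 0 < y -> derivable (gk R c) y 1.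
  by move=> y0; have H := @gk_der R c y y0; exact: ex_derive.
have dval (y : R) : 0 < y -> derive1 (gk R c) y = y^-1 - 1 + 2 * c * (y - 1).
  by move=> y0; rewrite derive1E; have H := @gk_der R c y y0; rewrite derive_val.
have x0 : 0 < x by exact: lt_le_trans a0 ax.
have sg (y : R) : a <= y -> 0 <= (y - 1) * derive1 (gk R c) y.
  move=> ay; have y0 : 0 < y by exact: lt_le_trans a0 ay.
  rewrite dval //; have := @gk_sign c a y; rewrite a0 ay => /(_ isT ca); done.
case: (lerP 1 x) => x1.
  rewrite -g1.
  have := (@ger0_derive1_le_cc _ (gk R c) 1 x).
  have hd : forall y : R, y \in `]1, x[ -> derivable (gk R c) y 1.
    move=> y; rewrite in_itv /= => /andP[y1 _]; apply: der; exact: lt_trans ltr01 y1.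
  have hp : forall y : R, y \in `]1, x[ -> 0 <= derive1 (gk R c) y.
    move=> y; rewrite in_itv /= => /andP[y1 _].
    have ay : a <= y by apply: le_trans a1 (ltW y1).
    by have := sg y ay; rewrite pmulr_rge0 // subr_gt0.
  have hc : {within `[1, x], continuous (gk R c)}%classic.
    apply: derivable_within_continuous => y; rewrite in_itv /= => /andP[y1 _].
    by apply: der; exact: lt_le_trans ltr01 y1.
  move=> /(_ hd hp hc); apply.
  - by rewrite in_itv /= lexx x1.
  - by rewrite in_itv /= lexx x1.
  - by [].
rewrite -g1.
have := (@ler0_derive1_le_cc _ (gk R c) x 1).
have hd : forall y : R, y \in `]x, 1[ -> derivable (gk R c) y 1.
  move=> y; rewrite in_itv /= => /andP[y1 _]; apply: der; exact: lt_trans x0 y1.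
have hp : forall y : R, y \in `]x, 1[ -> derive1 (gk R c) y <= 0.
  move=> y; rewrite in_itv /= => /andP[xy y1].
  have ay : a <= y by apply: le_trans ax (ltW xy).
  by have := sg y ay; rewrite nmulr_rge0 // subr_lt0.
have hc : {within `[x, 1], continuous (gk R c)}%classic.
  apply: derivable_within_continuous => y; rewrite in_itv /= => /andP[y1 _].
  by apply: der; exact: lt_le_trans x0 y1.
move=> /(_ hd hp hc); apply.
- by rewrite in_itv /= lexx (ltW x1).
- by rewrite in_itv /= lexx (ltW x1).
- exact: ltW.
Qed.
End T.

Section Main.
Variable R : realType.
Variable N : nat.

Lemma dotv_bnd (w l : 'I_N -> R) : in_simplex w -> (forall i, 0 <= l i <= 1) ->
  0 <= dotv w l <= 1.
Proof.
move=> [w0 w1] hl; apply/andP; split.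
  by apply: sumr_ge0 => i _; apply: mulr_ge0 => //; case/andP: (hl i).
rewrite -w1; apply: ler_sum => i _; rewrite -[leRHS]mulr1; apply: ler_wpM2l => //.
by case/andP: (hl i).
Qed.

Lemma step_simplex (eta : R) (w l : 'I_N -> R) : 0 < eta < 1 ->
  in_simplex w -> (forall i, 0 < w i) -> (forall i, 0 <= l i <= 1) ->
  in_simplex (mw_step eta w l) /\ (forall i, 0 < mw_step eta w l i).
Proof.
move=> /andP[e0 e1] hw wp hl.
have /andP[d0 d1] := dotv_bnd w l hw hl.
have fpos i : 0 < 1 - eta * (l i - dotv w l).
  have /andP[l0 l1] := hl i.
  have : l i - dotv w l <= 1 by lra.
  have : -1 <= l i - dotv w l by lra.
  nra.
have pos i : 0 < mw_step eta w l i by rewrite /mw_step mulr_gt0.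
split => //; split; first by move=> i; exact: ltW.
rewrite /mw_step; case: hw => _ ws.
under eq_bigr => i _ do rewrite mulrBr mulr1.
rewrite sumrB ws.
under eq_bigr => i _ do rewrite mulrCA mulrBr.
rewrite -mulr_sumr sumrB -mulr_suml ws mul1r.
by rewrite /dotv subrr mulr0 subr0.
Qed.
End Main.

Section Main2.
Variable R : realType.

Lemma ln_step (eta x : R) : 0 < eta < 1 -> -1 <= x <= 1 ->
  - x <= ln (1 - eta * x) / eta + eta / (2 * (1 - eta)).
Proof.
move=> /andP[e0 e1] /andP[xm xp].
set c := (2 * (1 - eta))^-1.
have c0 : 0 <= c by rewrite invr_ge0; lra.
have hca : 1 <= 2 * c * (1 - eta).
  by rewrite /c -mulrA mulrCA mulVf ?mulr1 //; lra.
have hz : 0 < 1 - eta <= 1 - eta * x.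
  apply/andP; split; first lra.
  have : eta * x <= eta by rewrite -[leRHS]mulr1 ler_wpM2l //; lra.
  lra.
have := @gk_ge0 R c _ _ hz _ hca.
have -> : gk R c (1 - eta * x) = ln (1 - eta * x) + (eta * x) + c * ((eta * x) * (eta * x)).
  have -> : gk R c (1 - eta * x) = ln (1 - eta * x) + (1 - (1 - eta * x)) + c * ((1 - (1 - eta * x)) * (1 - (1 - eta * x))) by [].
  by congr (_ + _ + _ * (_ * _)); ring.
move=> /(_ ltac:(lra)) H.
have -> : ln (1 - eta * x) / eta + eta / (2 * (1 - eta)) = (ln (1 - eta * x) + c * eta ^+ 2) / eta.
  by rewrite /c; field; apply/andP; split; lra.
rewrite ler_pdivlMr //.
have hx2 : x * x <= 1 by nra.
have : c * (eta * x * (eta * x)) <= c * eta ^+ 2.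
  by apply: ler_wpM2l => //; rewrite expr2; nra.
lra.
Qed.
End Main2.

Section Main3.
Variable R : realType.
Variable N : nat.

Lemma sum_nz (u g : 'I_N -> R) :
  \sum_(i < N | u i != 0) u i * g i = \sum_i u i * g i.
Proof.
rewrite big_mkcond; apply: eq_bigr => i _.
by case: eqP => [->|_] /=; rewrite ?mul0r.
Qed.

Lemma relent_diff (u w : 'I_N -> R) (f : 'I_N -> R) :
  (forall i, 0 <= u i) -> (forall i, 0 < w i) -> (forall i, 0 < f i) ->
  relent u w - relent u (fun i => w i * f i) = \sum_i u i * ln (f i).
Proof.
move=> u0 wp fp; rewrite /relent -sumrB -sum_nz; apply: eq_bigr => i ui.
have uip : 0 < u i by rewrite lt_def ui u0.
rewrite -mulrBr; congr (_ * _).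
rewrite invfM mulrA.
have ap : u i / w i \in Num.pos by rewrite posrE divr_gt0.
have fpi : f i \in Num.pos by rewrite posrE.
by rewrite (ln_div ap fpi) opprB addrC subrK.
Qed.

Lemma gibbs (u w : 'I_N -> R) : in_simplex u -> in_simplex w -> (forall i, 0 < w i) ->
  0 <= relent u w.
Proof.
move=> [u0 us] [w0 ws] wp.
have H : \sum_i (u i - w i) <= relent u w.
  rewrite /relent [X in _ <= X]big_mkcond /=; apply: ler_sum => i _.
  case: eqP => [->|ui] /=; first by rewrite sub0r oppr_le0.
  have uip : 0 < u i by rewrite lt_def u0 andbT; apply/eqP.
  have : ln (w i / u i) <= w i / u i - 1.
    have := @le_ln1Dx R (w i / u i - 1).
    rewrite addrCA subrr addr0; apply.
    have : 0 < w i / u i by rewrite divr_gt0.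
    lra.
  move=> h.
  have e : ln (u i / w i) = - ln (w i / u i).
    by rewrite -lnV ?invf_div // posrE divr_gt0.
  rewrite e.
  have : u i * (1 - w i / u i) <= u i * ln (u i / w i).
    by rewrite ler_wpM2l //; lra.
  rewrite mulrBr mulr1 mulrCA mulfV ?mulr1; last by apply/eqP.
  by rewrite -e.
by apply: le_trans H; rewrite sumrB us ws subrr.
Qed.
End Main3.

Lemma weights_inv (R : realType) (N T : nat) (L : nat -> 'I_N -> R)
  (hL : forall t i, (t < T)%N -> 0 <= L t i <= 1) (w1 : 'I_N -> R) (eta : R) :
  in_simplex w1 -> (forall i, 0 < w1 i) -> 0 < eta < 1 ->
  forall t, (t <= T)%N -> in_simplex (weights eta w1 L t) /\ (forall i, 0 < weights eta w1 L t i).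
Proof.
move=> hw hp he; elim=> [|t IH] ht //=.
have [h1 h2] := IH (ltnW ht).
by apply: step_simplex => // i; apply: hL.
Qed.

Lemma step_bound (R : realType) (N : nat) (eta : R) (w l u : 'I_N -> R) :
  0 < eta < 1 -> in_simplex w -> (forall i, 0 < w i) -> (forall i, 0 <= l i <= 1) ->
  in_simplex u ->
  dotv w l - dotv u l <=
    (relent u w - relent u (mw_step eta w l)) / eta + eta / (2 * (1 - eta)).
Proof.
move=> he hw wp hl [u0 us].
have /andP[d0 d1] := @dotv_bnd R N w l hw hl.
have [_ fp'] := @step_simplex R N eta w l he hw wp hl.
have fp i : 0 < 1 - eta * (l i - dotv w l).
  by have := fp' i; rewrite /mw_step pmulr_rgt0.
rewrite /mw_step relent_diff //.
have -> : dotv w l - dotv u l = \sum_i u i * (- (l i - dotv w l)).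
  rewrite /dotv.
  under [RHS]eq_bigr => i _ do rewrite opprB mulrBr.
  by rewrite sumrB -mulr_suml us mul1r [X in X - _ = _](_ : _ = \sum_i w i * l i) //.
set K := eta / (2 * (1 - eta)).
have -> : (\sum_i u i * ln (1 - eta * (l i - dotv w l))) / eta + K =
          \sum_i u i * (ln (1 - eta * (l i - dotv w l)) / eta + K).
  under [RHS]eq_bigr => i _ do rewrite mulrDr mulrA.
  by rewrite big_split /= -mulr_suml -mulr_suml us mul1r.
apply: ler_sum => i _; apply: ler_wpM2l => //; apply: ln_step => //.
by have /andP[l0 l1] := hl i; apply/andP; split; lra.
Qed.

Lemma part1 (R : realType) (N T : nat) (L : nat -> 'I_N -> R)
  (hL : forall t i, (t < T)%N -> 0 <= L t i <= 1) (w1 : 'I_N -> R) (eta : R) :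
  in_simplex w1 -> (forall i, 0 < w1 i) -> 0 < eta < 1 ->
  forall u : 'I_N -> R, in_simplex u ->
    regret eta w1 L T u <= relent u w1 / eta + T%:R * eta / (2 * (1 - eta)).
Proof.
move=> hw hp he u hu.
have inv := @weights_inv _ _ _ _ hL _ _ hw hp he.
set K := eta / (2 * (1 - eta)).
have e0 : 0 < eta by case/andP: he.
have main : forall n, (n <= T)%N ->
  \sum_(t < n) (dotv (weights eta w1 L t) (L t) - dotv u (L t)) <=
  (relent u w1 - relent u (weights eta w1 L n)) / eta + n%:R * K.
  elim=> [|n IH] hn.
    by rewrite big_ord0 subrr mul0r mul0r addr0.
  rewrite big_ord_recr /=.
  have [h1 h2] := inv n (ltnW hn).
  have := @step_bound _ _ _ _ _ _ he h1 h2 (fun i => hL n i hn) hu.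
  have := IH (ltnW hn).
  rewrite -/K mulrSr.
  set A := relent u w1; set B := relent u (weights eta w1 L n);
  set C := relent u (mw_step eta (weights eta w1 L n) (L n)).
  have -> : (A - C) / eta = (A - B) / eta + (B - C) / eta.
    by rewrite -mulrDl addrA subrK.
  move=> h h'.
  have := lerD h h'.
  rewrite !addrA. move=> H; apply: le_trans H _.
  by rewrite [(_ + 1) * K]mulrDl mul1r; lra.
have := main T (leqnn T).
move=> H; rewrite /regret -sumrB; apply: le_trans H _.
have [h1 h2] := inv T (leqnn T).
have g := @gibbs R N _ _ hu h1 h2.
rewrite /K mulrA lerD2r ler_pM2r ?invr_gt0 //.
by rewrite gerBl.
Qed.

Lemma relent_unif (R : realType) (N : nat) (u : 'I_N -> R) : in_simplex u ->
  relent u (@uniformw R N) <= ln N%:R.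
Proof.
move=> [u0 us].
have u1 i : u i <= 1.
  rewrite -us (bigD1 i) //= lerDl; exact: sumr_ge0.
have -> : ln (N%:R : R) = \sum_(i < N | u i != 0) u i * ln N%:R.
  by rewrite sum_nz -mulr_suml us mul1r.
apply: ler_sum => i ui; rewrite ler_wpM2l //.
have uip : 0 < u i by rewrite lt_def ui u0.

have Nr : (0 : R) < N%:R by rewrite ltr0n; case: (N) i {ui uip} => [[]|].
rewrite /uniformw invrK ler_ln ?posrE ?mulr_gt0 //.
by rewrite -[leRHS]mul1r ler_wpM2r // ltW.
Qed.

Lemma weights_eta0 (R : realType) (N : nat) (w1 : 'I_N -> R) L t i :
  weights 0 w1 L t i = w1 i.
Proof.
elim: t i => [|t IH] i //=.
by rewrite /mw_step mul0r subr0 mulr1 IH.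
Qed.

Lemma part2 (R : realType) (N T : nat) (L : nat -> 'I_N -> R)
  (hL : forall t i, (t < T)%N -> 0 <= L t i <= 1) :
  let eta : R := Num.sqrt (2 * ln N%:R)
              / (Num.sqrt (2 * ln N%:R) + Num.sqrt T%:R) in
   (forall u : 'I_N -> R, in_simplex u ->
      regret eta (@uniformw R N) L T u
        <= Num.sqrt (2 * T%:R * ln N%:R) + ln N%:R).
Proof.
move=> eta u hu.
have : eta = Num.sqrt (2 * ln N%:R) / (Num.sqrt (2 * ln N%:R) + Num.sqrt T%:R) by [].
clearbody eta => Heta.
case: N L hL u hu Heta => [|[|N]] L hL u hu Heta.
  by case: hu => _; rewrite big_ord0 => /eqP; rewrite eq_sym oner_eq0.
  have e0 : eta = 0 by rewrite Heta ln1 mulr0 sqrtr0 mul0r.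
  have h1 : forall v l : 'I_1 -> R, dotv v l = v ord0 * l ord0.
    by move=> v l; rewrite /dotv big_ord1.
  have hu0 : u ord0 = 1 by case: hu => _; rewrite big_ord1.
  rewrite /regret -sumrB big1 ?ln1 ?mulr0 ?sqrtr0 ?addr0 // => t _.
  rewrite !h1 e0 weights_eta0 hu0 /uniformw invr1 subrr //.
have lnN : 0 < ln (N.+2%:R : R) by apply: ln_gt0; rewrite ltr1n.
case: T L hL Heta => [|T] L hL Heta.
  rewrite /regret !big_ord0 subrr addr_ge0 ?sqrtr_ge0 //; exact: ltW.
set a := Num.sqrt (2 * ln (N.+2%:R : R)).
set b := Num.sqrt (T.+1%:R : R).
have a0 : 0 < a by rewrite sqrtr_gt0 mulr_gt0.
have b0 : 0 < b by rewrite sqrtr_gt0 ltr0n.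
have he : 0 < eta < 1.
  rewrite Heta -/a -/b divr_gt0 ?addr_gt0 //= ltr_pdivrMr ?addr_gt0 // mul1r ltrDl //.
have hw : in_simplex (@uniformw R N.+2).
  split; first by move=> i; rewrite /uniformw invr_ge0 ler0n.
  by rewrite /uniformw sumr_const card_ord -[_ *+ _]mulr_natr mulVf // pnatr_eq0.
have hp : forall i, 0 < @uniformw R N.+2 i by move=> i; rewrite /uniformw invr_gt0 ltr0n.
apply: le_trans (@part1 _ _ _ _ hL _ _ hw hp he _ hu) _.
have e0 : 0 < eta by case/andP: he.
apply: le_trans (_ : ln (N.+2)%:R / eta + T.+1%:R * eta / (2 * (1 - eta)) <= _).
  by rewrite lerD2r ler_pM2r ?invr_gt0 // relent_unif.
have la : ln (N.+2%:R : R) = a ^+ 2 / 2.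
  by rewrite /a sqr_sqrtr ?mulr_ge0 ?ltW // mulrC mulrA mulVf ?mul1r // pnatr_eq0.
have tb : (T.+1%:R : R) = b ^+ 2 by rewrite /b sqr_sqrtr ?ler0n.
have sab : Num.sqrt (2 * T.+1%:R * ln (N.+2%:R : R)) = a * b.
  rewrite /a /b -sqrtrM ?mulr_ge0 ?ler0n ?ltW //; congr Num.sqrt; ring.
rewrite sab la tb Heta -/a -/b.
rewrite le_eqVlt; apply/orP; left; apply/eqP; field.
by rewrite addrAC subrr add0r !gt_eqF ?addr_gt0.
Qed.

Theorem theorem5p1 (R : realType) (N T : nat) (L : nat -> 'I_N -> R)
  (hL : forall t i, (t < T)%N -> 0 <= L t i <= 1) :
  (forall (w1 : 'I_N -> R) (eta : R),
     in_simplex w1 -> (forall i, 0 < w1 i) -> 0 < eta < 1 ->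
     forall u : 'I_N -> R, in_simplex u ->
       regret eta w1 L T u
         <= relent u w1 / eta + T%:R * eta / (2 * (1 - eta)))
  /\
  (let eta : R := Num.sqrt (2 * ln N%:R)
              / (Num.sqrt (2 * ln N%:R) + Num.sqrt T%:R) in
   (forall u : 'I_N -> R, in_simplex u ->
      regret eta (@uniformw R N) L T u
        <= Num.sqrt (2 * T%:R * ln N%:R) + ln N%:R)
   /\
   (forall j : 'I_N,
      (forall k : 'I_N, \sum_(t < T) L t j <= \sum_(t < T) L t k) ->
      regret eta (@uniformw R N) L T (@basisv R N j)
        <= Num.sqrt (2 * T%:R * ln N%:R) + ln N%:R)).
Proof.
split; first by move=> w1 eta; exact: (@part1 _ _ _ _ hL w1 eta).
have P2 := @part2 R N T L hL.
move=> eta; split; first exact: P2.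
move=> j _; apply: P2; split.
  by move=> i; rewrite /basisv; case: eqP.
rewrite (bigD1 j) //= /basisv eqxx big1 ?addr0 // => i /negbTE -> //.
Qed.
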